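(* Let $p$ be an odd prime, $n$ an odd integer, and let $r,t$ and $v,w$ be pairs of integers satisfying $\gcd(n,r+t)=\gcd(n,r-t)=\gcd(n,p)=1$ and $\gcd(n,v+w)=\gcd(n,v-w)=1$. Let $u$ be a primitive $n$-th root of unity in an extension of $\mathbb{F}_p$, and set $\lambda_j^{(r,t)}=u^{(n-r)j}-u^{(n-t)j}$ for $j=0,\ldots,n-1$. Then \[\prod_{j=1}^{n-1}\lambda_j^{(r,t)}=\prod_{j=1}^{n-1}\lambda_j^{(v,w)}.\] *)

(* Defs.v *)
From HB Require Import structures.
From mathcomp Require Import all_boot all_order all_algebra.
Set Implicit Arguments. Unset Strict Implicit. Unset Printing Implicit Defensive.
Import Order.TTheory GRing.Theory Num.Theory.
Local Open Scope ring_scope.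

(* lambda_j^{(r,t)} = u^{(n-r)j} - u^{(n-t)j}, with integer exponents
   (u is a unit since it is a root of unity). *)
Definition lambda (F : fieldType) (n : nat) (u : F) (r t : int) (j : nat) : F :=
  u ^ ((n%:Z - r) * j%:Z) - u ^ ((n%:Z - t) * j%:Z).

(* Main.v *)
Require Import Defs.
From HB Require Import structures.
From mathcomp Require Import all_boot all_order all_algebra.
Import Order.TTheory GRing.Theory Num.Theory.
Local Open Scope ring_scope.
Section Helpers.
Local Set Implicit Arguments. Local Unset Strict Implicit.

Lemma prod_1sub (F : fieldType) n (w : F) : n.-primitive_root w ->
  \prod_(1 <= j < n) (1 - w ^+ j) = n%:R.
Proof.
move=> pw; have n0 := prim_order_gt0 pw.
have H := factor_Xn_sub_1 pw.
rewrite big_ltn // expr0 subrX1 in H.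
have Hx : ('X - 1 : {poly F}) != 0 by rewrite -(polyC1) polyXsubC_eq0.
move/(mulfI Hx): H => /(congr1 (horner^~ 1)).
rewrite horner_prod horner_sum.
under eq_bigr do rewrite hornerXsubC.
under [in RHS]eq_bigr do rewrite hornerXn expr1n.
by rewrite sumr_const card_ord.
Qed.

Lemma prod_sub1 (F : fieldType) n (w : F) : n.-primitive_root w -> odd n ->
  \prod_(1 <= j < n) (w ^+ j - 1) = n%:R.
Proof.
move=> pw on; have n0 := prim_order_gt0 pw.
rewrite -[RHS](prod_1sub pw).
under eq_bigr do rewrite -opprB -mulN1r.
rewrite big_split /= prodr_const_nat -signr_odd subn1.
by case: n on n0 {pw} => // n /= /negbTE -> _; rewrite expr0 mul1r.
Qed.

Lemma powmod (F : fieldType) n (u : F) (z : int) : n.-primitive_root u ->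
  u ^ z = u ^+ `|(z %% n%:Z)%Z|%N.
Proof.
move=> pu; have n0 := prim_order_gt0 pu.
have u0 : u != 0.
  apply/negP => /eqP u0; have := prim_expr_order pu.
  by rewrite u0 expr0n; case: n n0 {pu} => //= n _ /eqP; rewrite eq_sym oner_eq0.
have nz : n%:Z != 0 by rewrite eqz_nat -lt0n.
rewrite {1}(divz_eq z n%:Z) expfzDr // -exprz_exp exprzAC.

have -> : u ^ n%:Z = 1 := prim_expr_order pu.
rewrite exp1rz mul1r -{1}(gez0_abs (modz_ge0 z nz)).
by [].
Qed.

Lemma prod_lambda (F : fieldType) n (u : F) (r t : int) :
  n.-primitive_root u -> odd n -> gcdz n%:Z (r - t) = 1 ->
  \prod_(1 <= j < n) lambda n u r t j = n%:R.
Proof.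
move=> pu on g1; have n0 := prim_order_gt0 pu.
have u0 : u != 0.
  apply/negP => /eqP u0; have := prim_expr_order pu.
  by rewrite u0 expr0n; case: n n0 {pu on g1} => //= n _ /eqP; rewrite eq_sym oner_eq0.
set w := u ^ (t - r).
have pw : n.-primitive_root w.
  rewrite /w (powmod _ pu) prim_root_exp_coprime // /coprime gcdnC.
  have := g1; rewrite -gcdzN opprB -gcdz_modr /gcdz absz_nat.
  by case=> ->.
have E : forall j : nat, lambda n u r t j = (u ^ (n%:Z - t)) ^+ j * (w ^+ j - 1).
  move=> j; rewrite /lambda mulrBr mulr1 -!exprz_exp /w.
  congr (_ - _); rewrite -exprMn -(expfzDr _ _ u0) addrA subrK //.
under eq_bigr do rewrite E.
rewrite big_split /= (prod_sub1 pw on) prodrXr.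
have -> : (\sum_(1 <= i < n) i = n * n.-1./2)%N.
  by rewrite -bin2odd // -bin2_sum [in RHS]big_ltn.
rewrite exprM.
have -> : (u ^ (n%:Z - t)) ^+ n = 1.
  change ((u ^ (n%:Z - t)) ^ n%:Z = 1); rewrite exprzAC.
  have -> : u ^ n%:Z = 1 := prim_expr_order pu.
  by rewrite exp1rz.
by rewrite expr1n mul1r.
Qed.
End Helpers.

Theorem lemma3 (p : nat) (F : fieldType) (n : nat) (r t v w : int) (u : F) :
  prime p -> odd p -> p \in [pchar F] ->
  odd n ->
  gcdz n%:Z (r + t) = 1 -> gcdz n%:Z (r - t) = 1 -> coprime n p ->
  gcdz n%:Z (v + w) = 1 -> gcdz n%:Z (v - w) = 1 ->
  n.-primitive_root u ->
  \prod_(1 <= j < n) lambda n u r t j = \prod_(1 <= j < n) lambda n u v w j.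
Proof.
move=> _ _ _ on _ g1 _ _ g2 pu.
by rewrite (prod_lambda pu on g1) (prod_lambda pu on g2).
Qed.
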